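(* Let $p>2$ be a prime and $d\geq 2$ an integer with $p-1=df$. Let $\omega$ be a fixed generator of $\mathbb{F}_p^*$, and for $i,j\in\mathbb{Z}/d\mathbb{Z}$ let $(i,j)=\#\{(u,v):0\leq u,v\leq f-1,\ 1+\omega^{du+i}\equiv\omega^{dv+j}\pmod p\}$. Let $\theta=0$ if $f$ is even and $\theta=d/2$ if $f$ is odd. Define the $d\times d$ matrix $M=(m_{ij})_{0\leq i,j\leq d-1}$ by $m_{ij}=0$ if $(i,j)=0$ and $m_{ij}=1$ otherwise, and write $M^n=(m^{(n)}_{ij})$. Then \[ g_d(p)=\max_{0\leq\alpha\leq d-1}\min\{s\mid m^{(s-1)}_{(\alpha+\theta)\,\theta}\neq0\}. \]
   Context: For $a\in\mathbb{F}_p^*$, $s_d(p,a)=\min\{k\mid a=\sum_{i=1}^k a_i^d,\ a_i\in\mathbb{F}_p^*\}$, and $g_d(p)=\max_{a\in\mathbb{F}_p^*}s_d(p,a)$. The index $\alpha+\theta$ is taken modulo $d$, and $M^0$ is the identity matrix. *)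

(* Defs.v *)
From HB Require Import structures.
From mathcomp Require Import all_boot all_order all_algebra.
Set Implicit Arguments. Unset Strict Implicit. Unset Printing Implicit Defensive.
Import Order.TTheory GRing.Theory Num.Theory.
Local Open Scope ring_scope.

Definition sum_dpow (p d : nat) (a : 'F_p) (k : nat) : bool :=
  [exists t : k.-tuple 'F_p,
     all (fun x => x != 0) t && (a == \sum_(x <- t) x ^+ d)].

Lemma sum_dpow_ex (p d : nat) (a : 'F_p) : exists k, sum_dpow d a k.
Proof.
case: (eqVneq a 0) => [->|a0].
  exists 0%N; apply/existsP; exists [tuple]; by rewrite big_nil.
exists (a : nat); apply/existsP; exists [tuple of nseq a (1 : 'F_p)].
apply/andP; split.
  by apply/allP => x /nseqP [-> _]; rewrite oner_eq0.
rewrite /= big_nseq expr1n iter_addr addr0.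
by rewrite natr_Zp.
Qed.

(* s_d(p,a) : least number of nonzero d-th powers summing to a
   (meaningful for a != 0, where k >= 1 automatically) *)
Definition s_d (p d : nat) (a : 'F_p) : nat := ex_minn (sum_dpow_ex d a).

Definition g_d (p d : nat) : nat := \max_(a : 'F_p | a != 0) s_d d a.

Definition cyclo (p d f : nat) (w : 'F_p) (i j : nat) : nat :=
  #|[set uv : 'I_f * 'I_f |
       1 + w ^+ (d * uv.1 + i)%N == w ^+ (d * uv.2 + j)%N]|.

Definition cycloM (p d f : nat) (w : 'F_p) : 'M[int]_d :=
  \matrix_(i < d, j < d) (if cyclo d f w i j == 0%N then 0 else 1).

Definition mxpow (d : nat) (A : 'M[int]_d) (n : nat) : 'M[int]_d :=
  iter n (mulmx A) 1%:M.

Definition ordmod (d : nat) (hd : (2 <= d)%N) (k : nat) : 'I_d :=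
  Ordinal (ltn_pmod k (ltnW hd)).

Definition least_nat (P : pred nat) (n : nat) : Prop :=
  P n /\ forall m, P m -> (n <= m)%N.

(* Main.v *)
Require Import Defs.
From HB Require Import structures.
From mathcomp Require Import all_boot all_order all_algebra.
From mathcomp Require Import finfield.
From mathcomp Require Import zify ring.
Import Order.TTheory GRing.Theory Num.Theory.
Local Open Scope ring_scope.

Section S.
Variables (p d f : nat) (w : 'F_p).
Hypotheses (hp : prime p) (hp2 : (2 < p)%N) (hd : (2 <= d)%N)
  (hdf : p.-1 = (d * f)%N) (hw : (p.-1).-primitive_root w).

Definition th := if odd f then d./2 else 0%N.
Definition incls (x : 'F_p) (i : nat) := exists k, x = w ^+ (d * k + i)%N.

Lemma f_gt0 : (0 < f)%N.
Proof. have : (0 < p.-1)%N by rewrite -ltnS prednK ?prime_gt0 //; lia.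
by rewrite hdf muln_gt0 => /andP[]. Qed.

Lemma w_df : w ^+ (d * f) = 1.
Proof. by rewrite -hdf (prim_expr_order hw). Qed.

Lemma w_red N i : w ^+ (d * N + i)%N = w ^+ (d * (N %% f) + i)%N.
Proof.
have -> : (d * N + i = d * f * (N %/ f) + (d * (N %% f) + i))%N.
  by rewrite {1}(divn_eq N f); ring.
by rewrite exprD exprM w_df expr1n mul1r.
Qed.

Lemma w_neq0 : w != 0.
Proof.
apply/eqP => w0; have := prim_expr_order hw; rewrite w0 expr0n.
have : (p.-1 != 0)%N by rewrite -lt0n -ltnS prednK ?prime_gt0 //; lia.
by move/negPf => -> /eqP; rewrite eq_sym oner_eq0.
Qed.

Lemma incls_neq0 x i : incls x i -> x != 0.
Proof. by case=> k ->; rewrite expf_neq0 // w_neq0. Qed.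

Lemma all_pow x : x != 0 -> exists k, x = w ^+ k.
Proof.
move=> x0.
have hx : x ^+ p.-1 = 1.
  apply: (mulIf x0); rewrite mul1r -exprSr prednK ?prime_gt0 //.
  by have := expf_card x; rewrite card_Fp.
by have [i ->] := prim_rootP hw hx; exists i.
Qed.

Lemma incls_ex x : x != 0 -> exists i : 'I_d, incls x i.
Proof.
move=> /all_pow [k ->].
have hd0 : (0 < d)%N by lia.
exists (Ordinal (ltn_pmod k hd0)); exists (k %/ d)%N => /=.
by rewrite {1}(divn_eq k d) mulnC.
Qed.

Lemma incls_uniq x (i j : 'I_d) : incls x i -> incls x j -> i = j.
Proof.
case=> k -> [l] /eqP; rewrite (eq_prim_root_expr hw) hdf => /eqP E.
have : ((d * k + i) %% d = (d * l + j) %% d)%N.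
  by rewrite -(modn_dvdm _ (dvdn_mulr f (dvdnn d))) E modn_dvdm ?dvdn_mulr.
rewrite ![(d * _)%N]mulnC !modnMDl !modn_small // => ij.
by apply: val_inj.
Qed.

Lemma neg1 : exists q, -1 = w ^+ (d * q + th %% d)%N.
Proof.
have podd : odd p by case: (even_prime hp) => // p2; lia.
set z := w ^+ (p.-1)./2.
have z2 : z ^+ 2 = 1.
  rewrite /z -exprM.
  have -> : ((p.-1)./2 * 2 = p.-1)%N.
    have := odd_double_half p.-1; rewrite -subn1 oddB ?podd //; last by lia.
    rewrite -muln2 /=; lia.
  exact: prim_expr_order hw.
have z1 : z != 1.
  rewrite /z -(expr0 w) (eq_prim_root_expr hw) mod0n modn_small; last first.
    have := prime_gt0 hp; lia.
  have := prime_gt0 hp; lia.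
have zm : z = -1 by move/eqP: z2; rewrite sqrf_eq1 (negPf z1) => /eqP.
have hdfo : ~~ odd (d * f)%N.
  by rewrite -hdf -subn1 oddB ?podd //; have := prime_gt0 hp; lia.
rewrite -zm /z hdf /th.
case: ifP => fo.
- have de : ~~ odd d by move: hdfo; rewrite oddM fo andbT.
  exists f./2; rewrite modn_small; last by lia.
  congr (_ ^+ _).
  have h1 := odd_double_half f; have h2 := odd_double_half d; rewrite fo in h1.
  have h3 := odd_double_half (d * f)%N; rewrite (negPf hdfo) in h3.
  rewrite (negPf de) in h2; rewrite -!muln2 in h1 h2 h3.
  nia.
- exists f./2; rewrite mod0n addn0; congr (_ ^+ _).
  have h1 := odd_double_half f; rewrite fo in h1.
  have h3 := odd_double_half (d * f)%N; rewrite (negPf hdfo) in h3.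
  rewrite -!muln2 in h1 h3; nia.
Qed.


Lemma negcls x i : incls x i -> incls (-x) ((i + th) %% d)%N.
Proof.
case=> k ->; have [q hq] := neg1.
set r := (th %% d + i)%N.
exists (q + k + r %/ d)%N.
rewrite -mulN1r hq -exprD.
have -> : ((i + th) %% d = r %% d)%N by rewrite /r addnC modnDml.
congr (_ ^+ _); have := divn_eq r d; rewrite /r.
move: ((th %% d + i) %/ d)%N ((th %% d + i) %% d)%N (th %% d)%N => a b t hr; nia.
Qed.

Lemma two_th : ((th + th) %% d = 0)%N.
Proof.
rewrite /th; case: ifP => fo; last by rewrite mod0n.
have hdfo : ~~ odd (d * f)%N.
  have podd : odd p by case: (even_prime hp) => // p2; lia.
  by rewrite -hdf -subn1 oddB ?podd //; have := prime_gt0 hp; lia.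
have de : ~~ odd d by move: hdfo; rewrite oddM fo andbT.
have h2 := odd_double_half d; rewrite (negPf de) -muln2 in h2.
have -> : (d./2 + d./2 = d)%N by lia.
exact: modnn.
Qed.

Lemma inH_neg x : incls x (th %% d) -> exists y, y != 0 /\ -x = y ^+ d.
Proof.
move/negcls; rewrite modnDml two_th => -[k ->].
exists (w ^+ k); split; first by rewrite expf_neq0 // w_neq0.
by rewrite addn0 -exprM mulnC.
Qed.

Lemma dpow_cls y : y != 0 -> incls (y ^+ d) 0.
Proof. by move/all_pow => [k ->]; exists k; rewrite addn0 -exprM mulnC. Qed.

Lemma edgeA x y (i j : 'I_d) : incls x i -> incls (x + y ^+ d) j -> y != 0 ->
  cyclo d f w i j != 0%N.
Proof.
case=> k hx [l hxy] /all_pow [e he].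
set E := (e * f.-1)%N.
have fp := f_gt0.
have c1 : w ^+ (d * e) * w ^+ (d * E) = 1.
  rewrite -exprD (_ : (d * e + d * E = d * f * e)%N); last first.
    rewrite /E; have := prednK fp; move: (f.-1) => g <-; ring.
  by rewrite exprM w_df expr1n.
rewrite -lt0n card_gt0; apply/set0Pn.
exists (Ordinal (ltn_pmod (k + E) fp), Ordinal (ltn_pmod (l + E) fp)).
rewrite inE /= -!w_red.
have -> : w ^+ (d * (k + E) + i) = x * w ^+ (d * E).
  by rewrite hx -exprD; congr (_ ^+ _); ring.
have -> : w ^+ (d * (l + E) + j) = (x + y ^+ d) * w ^+ (d * E).
  by rewrite hxy -exprD; congr (_ ^+ _); ring.
rewrite he -exprM (mulnC e d) -{1}c1; apply/eqP; ring.
Qed.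

Lemma edgeB x (i j : 'I_d) : cyclo d f w i j != 0%N -> incls x i ->
  exists y, y != 0 /\ incls (x + y ^+ d) j.
Proof.
rewrite -lt0n card_gt0 => /set0Pn [[u v]]; rewrite inE /= => /eqP E [k hx].
set U := (k + u * f.-1)%N.
have fp := f_gt0.
exists (w ^+ U); split; first by rewrite expf_neq0 // w_neq0.
have hc : w ^+ (d * U) * w ^+ (d * u + i) = x.
  rewrite hx -exprD (_ : (d * U + (d * u + i) = d * f * u + (d * k + i))%N).
    by rewrite exprD exprM w_df expr1n mul1r.
  rewrite /U; move: (nat_of_ord u) => n; have := prednK fp; move: (f.-1) => g <-; ring.
exists (U + v)%N.
rewrite -exprM mulnC -{1}hc -{2}(mulr1 (w ^+ (d * U))) -mulrDr addrC E -exprD.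
congr (_ ^+ _); ring.
Qed.


Fixpoint walk (A : 'M[int]_d) n (i j : 'I_d) : Prop :=
  if n is n'.+1 then exists k, A i k != 0 /\ walk A n' k j else i = j.

Lemma mxpow_walk (A : 'M[int]_d) : (forall i j, 0 <= A i j) ->
  forall n i j, 0 <= mxpow A n i j /\ (mxpow A n i j != 0 <-> walk A n i j).
Proof.
move=> A0; elim=> [|n IH] i j.
  rewrite /mxpow /= mxE; case: eqP => [->|ij]; split => //=; split => //.
rewrite /mxpow iterS -/(mxpow A n) mxE.
have t0 : forall k, 0 <= A i k * mxpow A n k j.
  by move=> k; rewrite mulr_ge0 // (IH k j).1.
split; first by rewrite sumr_ge0.
split.
- case: (boolP [exists k, A i k * mxpow A n k j != 0]) => [/existsP[k Hk]|/existsPn H].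
    move=> _; exists k; move: Hk; rewrite mulf_eq0 negb_or => /andP[h1 h2].
    by split => //; apply/(IH k j).2.
  by rewrite big1 ?eqxx // => k _; apply/eqP; move: (H k); rewrite negbK.
- case=> k [h1 /(IH k j).2 h2].
  have tk : 0 < A i k * mxpow A n k j by rewrite lt0r t0 andbT mulf_neq0.
  rewrite (bigD1 k) //=; apply: lt0r_neq0; apply: ltr_wpDr => //.
  by rewrite sumr_ge0.
Qed.

Let T := ordmod hd th.
Let A := cycloM d f w.

Lemma A_ge0 i j : 0 <= A i j.
Proof. by rewrite /A mxE; case: ifP. Qed.

Lemma A_neq0 i j : (A i j != 0) = (cyclo d f w i j != 0%N).
Proof. by rewrite /A mxE; case: ifP => /eqP. Qed.

Lemma L1 (t : seq 'F_p) : forall x (i : 'I_d), x != 0 -> incls x i ->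
  all (fun y => y != 0) t -> x + \sum_(y <- t) y ^+ d = 0 ->
  exists2 n, (n < size t)%N & walk A n i T.
Proof.
elim: t => [|y t IH] x i x0 hx.
  by move=> _; rewrite big_nil addr0 => /eqP; rewrite (negPf x0).
rewrite /= big_cons => /andP[y0 ht] hs.
case: (eqVneq (x + y ^+ d) 0) => [hx0|hx0].
  exists 0%N => //=.
  have : incls (- x) 0 by move/eqP: hx0; rewrite addr_eq0 => /eqP ->; rewrite opprK; apply: dpow_cls.
  move/negcls; rewrite opprK add0n => hT.
  exact: (@incls_uniq x i T hx hT).
have [j hj] := incls_ex _ hx0.
have hs' : (x + y ^+ d) + \sum_(j <- t) j ^+ d = 0 by rewrite -addrA.
have [n hn hw'] := IH _ _ hx0 hj ht hs'.
exists n.+1 => //=; exists j; split => //.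
by rewrite A_neq0; exact: (edgeA _ _ _ _ hx hj y0).
Qed.

Lemma L2 n : forall x (i : 'I_d), incls x i -> walk A n i T ->
  exists t : seq 'F_p, [/\ size t = n.+1, all (fun y => y != 0) t &
    x + \sum_(y <- t) y ^+ d = 0].
Proof.
elim: n => [|n IH] x i hx /=.
  move=> hiT; rewrite hiT in hx.
  have [y [y0 hy]] := inH_neg _ hx.
  exists [:: y]; split => //=; first by rewrite y0.
  by rewrite big_seq1 -hy subrr.
case=> k [hik hw'].
rewrite A_neq0 in hik.
have [y [y0 hy]] := edgeB _ _ _ hik hx.
have [t [st at0 ht]] := IH _ _ hy hw'.
exists (y :: t); split => /=; [by rewrite st | by rewrite y0 at0 |].
by rewrite big_cons addrA.
Qed.


Lemma walk_mx n i j : (mxpow A n i j != 0) <-> walk A n i j.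
Proof. exact: (@mxpow_walk A A_ge0 n i j).2. Qed.

Lemma sum_dpow_s (a : 'F_p) : sum_dpow d a (s_d d a).
Proof. by rewrite /s_d; case: ex_minnP. Qed.

Lemma K1 (alpha : 'I_d) a s : a != 0 -> incls a alpha -> sum_dpow d a s ->
  exists2 n, (n < s)%N & walk A n (ordmod hd (alpha + th)) T.
Proof.
move=> a0 ha /existsP [t /andP [ht /eqP hs]].
have hna : incls (-a) (ordmod hd (alpha + th)) := negcls _ _ ha.
have hs' : -a + \sum_(x <- t) x ^+ d = 0 by rewrite -hs addNr.
have na0 : -a != 0 by rewrite oppr_eq0.
have [n hn hw'] := L1 t (-a) (ordmod hd (alpha + th)) na0 hna ht hs'.
by exists n => //; rewrite size_tuple in hn.
Qed.

Lemma K2 (alpha : 'I_d) a n : incls a alpha ->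
  walk A n (ordmod hd (alpha + th)) T -> sum_dpow d a n.+1.
Proof.
move=> ha hw'.
have hna : incls (-a) (ordmod hd (alpha + th)) := negcls _ _ ha.
have [t [st at0 ht]] := L2 n (-a) _ hna hw'.
apply/existsP; exists (Tuple (introT eqP st)); rewrite /= at0 /=.
by move/eqP: ht; rewrite addrC subr_eq0 eq_sym.
Qed.

Definition Q (alpha : 'I_d) := fun s => (0 < s)%N &&
  (mxpow (cycloM d f w) (s - 1) (ordmod hd (alpha + th)) (ordmod hd th) != 0).

Lemma exQ alpha : exists s, Q alpha s.
Proof.
have ha : incls (w ^+ alpha) alpha by exists 0%N; rewrite muln0 add0n.
have [n hn hw'] := K1 alpha (w ^+ alpha) (s_d d (w ^+ alpha)) (incls_neq0 _ _ ha) ha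
  (sum_dpow_s _).
by exists n.+1; rewrite /Q /= subn1 /=; apply/walk_mx.
Qed.

Lemma hval (alpha : 'I_d) a : a != 0 -> incls a alpha -> ex_minn (exQ alpha) = s_d d a.
Proof.
move=> a0 ha; apply/eqP; rewrite eqn_leq; apply/andP; split.
- case: ex_minnP => m _ hm.
  have [n hn hw'] := K1 alpha a (s_d d a) a0 ha (sum_dpow_s a).
  apply: leq_trans (hm n.+1 _) hn.
  by rewrite /Q /= subn1 /=; apply/walk_mx.
- case: ex_minnP => m /andP[m0 hm] _.
  rewrite /s_d; case: ex_minnP => s _ hs; apply: hs.
  have := K2 alpha a (m - 1) ha ((walk_mx _ _ _).1 hm).
  by rewrite subn1 prednK.
Qed.

Lemma main : exists h : 'I_d -> nat,
    (forall alpha : 'I_d,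
       least_nat (fun s => (0 < s)%N &&
         (mxpow (cycloM d f w) (s - 1) (ordmod hd (alpha + th)) (ordmod hd th) != 0))
         (h alpha)) /\
    g_d p d = \max_(alpha < d) h alpha.
Proof.
exists (fun alpha => ex_minn (exQ alpha)); split.
  by move=> alpha; case: ex_minnP => m hm hmin; split.
apply/eqP; rewrite eqn_leq; apply/andP; split.
  apply/bigmax_leqP => a a0.
  have [al hal] := incls_ex a a0.
  by rewrite -(hval al a a0 hal); apply: leq_bigmax.
apply/bigmax_leqP => al _.
have ha : incls (w ^+ al) al by exists 0%N; rewrite muln0 add0n.
rewrite (hval al (w ^+ al) (incls_neq0 _ _ ha) ha).
rewrite /g_d; apply: leq_bigmax_cond; exact: (incls_neq0 _ _ ha).
Qed.

End S.

Theorem theorem2 (p d f : nat) (w : 'F_p)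
  (hp : prime p) (hp2 : (2 < p)%N) (hd : (2 <= d)%N) (hdf : p.-1 = (d * f)%N)
  (hw : (p.-1).-primitive_root w) :
  let theta := if odd f then d./2 else 0%N in
  exists h : 'I_d -> nat,
    (forall alpha : 'I_d,
       least_nat (fun s => (0 < s)%N &&
         (mxpow (cycloM d f w) (s - 1) (ordmod hd (alpha + theta)) (ordmod hd theta) != 0))
         (h alpha)) /\
    g_d p d = \max_(alpha < d) h alpha.
Proof.
move=> theta; exact: (@main p d f w hp hp2 hd hdf hw).
Qed.
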